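(* Let $f:\mathbb{N}\to\mathbb{R}$ with $f(1)=1$. Assume there exist an integer $N\geq2$, $C>0$ and $\gamma\in\mathbb{R}$ such that $f(n)=0$ for all $n\geq N+1$ and $|f(n)|\leq Cn^\gamma$ for all $n\leq N$. Then $$|f^{-1}(n)|\leq n^{\gamma+\varsigma}, \quad n\geq2,$$ where $\varsigma>0$ is the unique root of $\sum_{m=2}^{N} m^{-s} = \frac{1}{C}$.
   Context: $f^{-1}$ denotes the Dirichlet inverse of $f$: the arithmetic function with $\sum_{d\mid n} f(n/d) f^{-1}(d)=\varepsilon(n)$ for all $n$, where $\varepsilon(1)=1$ and $\varepsilon(n)=0$ for $n\ge2$. *)

(* Defs.v *)
From HB Require Import structures.
From mathcomp Require Import all_boot all_order all_algebra.
From mathcomp Require Import all_classical all_reals all_analysis.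
Set Implicit Arguments. Unset Strict Implicit. Unset Printing Implicit Defensive.
Import Order.TTheory GRing.Theory Num.Theory.
Local Open Scope ring_scope.

(* Dirichlet convolution on arithmetic functions nat -> R (only n >= 1 matter). *)
Definition dirichlet_conv (R : ringType) (f g : nat -> R) (n : nat) : R :=
  \sum_(d <- divisors n) f (n %/ d)%N * g d.

Definition eps_arith (R : ringType) (n : nat) : R := (n == 1)%N%:R.

Definition is_dirichlet_inverse (R : ringType) (f g : nat -> R) : Prop :=
  forall n : nat, (0 < n)%N -> dirichlet_conv f g n = eps_arith R n.

(* Main.v *)
Require Import Defs.
From HB Require Import structures.
From mathcomp Require Import all_boot all_order all_algebra.
From mathcomp Require Import all_classical all_reals all_analysis.
From mathcomp Require Import ring.
Import Order.TTheory GRing.Theory Num.Theory.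
Local Open Scope ring_scope.

Lemma sum_sub_uniq (R : numDomainType) (s t : seq nat) (F : nat -> R) :
  uniq s -> uniq t -> {subset s <= t} -> (forall i, i \in t -> 0 <= F i) ->
  \sum_(i <- s) F i <= \sum_(i <- t) F i.
Proof.
move=> us ut st F0.
rewrite [X in _ <= X](bigID (fun i => i \in s)) /= -[X in _ <= X + _]big_filter.
have E : perm_eq [seq i <- t | i \in s] s.
  apply: uniq_perm; first by rewrite filter_uniq.
    by [].
  by move=> i; rewrite mem_filter; case his: (i \in s) => //=; rewrite st.
idtac.
rewrite (perm_big _ E).
rewrite lerDl big_seq_cond; apply: sumr_ge0 => i /andP[it _]; exact: F0.
Qed.

Lemma term_id (R : realType) (C gamma vs : R) (m d : nat) :
  (0 < m)%N -> (0 < d)%N ->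
  C * (m%:R `^ gamma) * (d%:R `^ (gamma + vs)) =
  C * ((m * d)%N%:R `^ (gamma + vs)) * (m%:R `^ (- vs)).
Proof.
move=> m0 d0.
have m0' : (m%:R : R) != 0 by rewrite pnatr_eq0 -lt0n.
rewrite natrM powRM ?ler0n // powRN.
rewrite [m%:R `^ (gamma + vs)]powRD; last by apply/implyP => _.
have a0 : (m%:R : R) `^ vs != 0 by rewrite powR_eq0 negb_and m0'.
by field.
Qed.

Theorem proposition3p16 (R : realType) (f finv : nat -> R) (N : nat) (C gamma vs : R) :
  f 1%N = 1 ->
  (2 <= N)%N ->
  0 < C ->
  (forall n : nat, (N < n)%N -> f n = 0) ->
  (forall n : nat, (1 <= n <= N)%N -> `|f n| <= C * (n%:R `^ gamma)) ->
  is_dirichlet_inverse f finv ->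
  0 < vs ->
  \sum_(2 <= m < N.+1) (m%:R `^ (- vs)) = C^-1 ->
  forall n : nat, (2 <= n)%N -> `|finv n| <= n%:R `^ (gamma + vs).
Proof.
move=> f1 N2 C0 fN fC hinv vs0 hsum.
suff H : forall n, (0 < n)%N -> `|finv n| <= n%:R `^ (gamma + vs).
  by move=> n n2; apply: H; apply: leq_trans n2.
elim/ltn_ind => n IH n0.
have Hn := hinv n n0.
rewrite /dirichlet_conv (big_rem n (divisors_id n0)) divnn n0 f1 mul1r in Hn.
case: (ltnP 1 n) => n1; last first.
  have -> : n = 1%N by apply/eqP; rewrite eqn_leq n1.
  have -> : finv 1%N = 1.
    by move: (hinv 1%N isT); rewrite /dirichlet_conv /= big_seq1 divnn /= f1 mul1r /eps_arith.
  by rewrite powR1 normr1.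
rewrite /eps_arith (_ : (n == 1)%N = false) in Hn; last by rewrite gtn_eqF.
move/eqP: Hn; rewrite addr_eq0 => /eqP ->; rewrite normrN.
set s := rem n (divisors n).
have sP : forall d, d \in s -> [/\ (d %| n)%N, (0 < d)%N, (d < n)%N & (2 <= n %/ d)%N].
  move=> d; rewrite /s (mem_rem_uniq _ (divisors_uniq n)) inE => /andP[dn].
  rewrite -dvdn_divisors // => dv.
  have d0 : (0 < d)%N by apply: dvdn_gt0 dv.
  have dle : (d <= n)%N by apply: dvdn_leq.
  have dlt : (d < n)%N by rewrite ltn_neqAle dn dle.
  split => //.
  have := divnK dv; case E: (n %/ d)%N => [|[|k]] //.
    by rewrite mul0n => E0; rewrite -E0 in n0.
  by rewrite mul1n => Ed; rewrite Ed ltnn in dlt.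
pose h := fun m : nat => if (m <= N)%N then m%:R `^ (- vs) else 0 : R.
apply: (le_trans (ler_norm_sum _ _ _)).
apply: (@le_trans _ _ (\sum_(d <- s) C * n%:R `^ (gamma + vs) * h (n %/ d)%N)).
  rewrite big_seq [X in _ <= X]big_seq; apply: ler_sum => d ds.
  have [dv d0 dlt m2] := sP d ds.
  rewrite normrM /h; case: (leqP (n %/ d) N) => mN; last first.
    by rewrite fN // normr0 mul0r mulr0.
  rewrite -{2}(divnK dv) -term_id ?(leq_trans _ m2) //.
  apply: ler_pM => //.
  - by apply: fC; rewrite mN (leq_trans _ m2).
  - exact: IH.
rewrite -big_distrr /=.
suff key : \sum_(i <- s) h (n %/ i)%N <= C^-1.
  apply: le_trans (ler_wpM2l _ key) _.
    by rewrite mulr_ge0 ?powR_ge0 ?ltW.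
  by rewrite mulrAC mulfV ?mul1r // lt0r_neq0.
rewrite -hsum.
rewrite -(big_map (fun d => n %/ d)%N xpredT h).
rewrite /h -big_mkcond /= -big_filter.
apply: sum_sub_uniq.
- rewrite filter_uniq // map_inj_in_uniq ?rem_uniq ?divisors_uniq //.
  move=> d1 d2 d1s d2s E.
  have [dv1 p1 _ m1] := sP d1 d1s; have [dv2 p2 _ _] := sP d2 d2s.
  have := divnK dv1; have := divnK dv2; rewrite -E => e2 e1.
  by apply/eqP; rewrite -(eqn_pmul2l (leq_trans _ m1)) // e1 e2.
- exact: iota_uniq.
- move=> m; rewrite mem_filter => /andP[mN /mapP[d ds Em]]; subst m.
  have [_ _ _ m2] := sP d ds.
  by rewrite mem_index_iota m2 ltnS.
- by move=> i _; apply: powR_ge0.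
Qed.
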